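(* $\mathbf{EQP}=\mathbf{EBQP^*}$.
   Context: A quantum Turing machine (QTM) $\mathcal{M}=(\Sigma,Q,\delta)$ consists of: - a finite alphabet $\Sigma$ containing a blank $\#$ and containing $\{0,1\}$; - a finite set $Q$ of states with an initial state $q_0$ and a final state $q_f\neq q_0$; - a quantum transition function $\delta: Q\times\Sigma\to\tilde{\mathbf{C}}^{\Sigma\times Q\times D}$, where $D=\{L,R\}$ or $\{L,N,R\}$ and $\tilde{\mathbf{C}}$ is the set of computable complex numbers. The machine has a two-way infinite tape indexed by $\mathbf{Z}$ and a single head. $\delta$ induces a time-evolution operator on finite complex linear combinations of configurations, which must be unitary. Observing a superposition $\sum_i\alpha_i c_i$ yields configuration $c_i$ with probability $|\alpha_i|^2$ and collapses the state to $c_i$. The designated output cell is always, when read, in a state $\alpha|1\rangle+\beta|0\rangle$ with $|\alpha|^2+|\beta|^2=1$. A modified bulk quantum Turing machine (MBQTM) has the same data and unitarity requirement, but its readout is an $(\epsilon,\theta)$-measurement. On a cell in state $\alpha|1\rangle+\beta|0\rangle$ it returns a value within $\theta$ of $|\alpha|^2-|\beta|^2$ with error probability less than $\epsilon$. If $\alpha=0$ or $\beta=0$ the error probability is exactly zero. The measurement disturbs the state, cannot be repeated, and no partial observation is allowed. $\mathbf{EQP}$ is the class of languages $L$ for which there exist a QTM and a polynomial $p$ such that, for every input $x$, observing a certain tape cell after $p(|x|)$ steps gives $1$ with probability $1$ if $x\in L$ and $0$ with probability $1$ otherwise. $\mathbf{EBQP^*}$ is the class of languages $L$ for which there exist an MBQTM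 and a polynomial $p$ such that, for every input $x$, an $(\epsilon,\theta)$-measurement of a certain tape cell after $p(|x|)$ steps gives a value greater than $1-\theta$ with probability $1$ if $x\in L$, and a value less than $-1+\theta$ with probability $1$ otherwise. *)

(* Defs.v *)
From HB Require Import structures.
From mathcomp Require Import all_boot all_order all_algebra.
From mathcomp Require Import finmap.
From mathcomp Require Import boolp classical_sets reals ereal.
From mathcomp Require Import measure lebesgue_measure probability.
From mathcomp.real_closed Require Import complex.

Set Implicit Arguments.
Unset Strict Implicit.
Unset Printing Implicit Defensive.

Import Order.TTheory GRing.Theory Num.Theory.

Inductive recfun : Type :=
| RZero : recfun
| RSucc : recfun
| RProj : nat -> recfun
| RComp : recfun -> seq recfun -> recfun
| RPrec : recfun -> recfun -> recfun
| RMu   : recfun -> recfun.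

Inductive reval : recfun -> seq nat -> nat -> Prop :=
| reZero v : reval RZero v 0
| reSucc x v : reval RSucc (x :: v) x.+1
| reProj i v : i < size v -> reval (RProj i) v (nth 0 v i)
| reComp f gs v ys y :
    revals gs v ys -> reval f ys y -> reval (RComp f gs) v y
| rePrec0 f g v y : reval f v y -> reval (RPrec f g) (0 :: v) y
| rePrecS f g n v r y :
    reval (RPrec f g) (n :: v) r -> reval g (n :: r :: v) y ->
    reval (RPrec f g) (n.+1 :: v) y
| reMu f v n :
    reval f (n :: v) 0 -> (forall m, m < n -> exists k, reval f (m :: v) k.+1) ->
    reval (RMu f) v n
with revals : seq recfun -> seq nat -> seq nat -> Prop :=
| resNil v : revals [::] v [::]
| resCons g gs v y ys :
    reval g v y -> revals gs v ys -> revals (g :: gs) v (y :: ys).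

Definition computable_nat_fun (f : nat -> nat) : Prop :=
  exists e : recfun, forall n, reval e [:: n] (f n).

Local Open Scope ring_scope.

Section Computable.
Variable R : realType.

Definition computable_real (r : R) : Prop :=
  exists a b c : nat -> nat,
    [/\ computable_nat_fun a, computable_nat_fun b, computable_nat_fun c &
        forall n, `| r - ((a n)%:R - (b n)%:R) / (c n).+1%:R | <= (2%:R ^+ n)^-1].

Definition computable_complex (z : R[i]) : Prop :=
  computable_real (complex.Re z) /\ computable_real (complex.Im z).
End Computable.

(* head moves; D = {L, N, R} (a machine with D = {L, R} is one that gives   *)
(* amplitude 0 to N)                                                         *)
Inductive dir := DL | DN | DR.
Definition dirs : seq dir := [:: DL; DN; DR].
Definition dshift (d : dir) : int :=
  match d with DL => -1 | DN => 0 | DR => 1 end.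

Section QTM.
Variable R : realType.
Local Notation C := R[i].

Record qtm := QTM {
  Sig : finType;
  blank : Sig; sym0 : Sig; sym1 : Sig;
  Sig_distinct : uniq [:: blank; sym0; sym1];
  St : finType;
  q_init : St; q_fin : St;
  q_init_fin : q_init != q_fin;
  (* delta q s s' q' d = amplitude of (write s', go to state q', move d)
     when in state q reading s *)
  delta : St -> Sig -> Sig -> St -> dir -> C;
  delta_computable : forall q s s' q' d, computable_complex (delta q s s' q' d)
}.

Variable M : qtm.

Definition tape := {fsfun int -> Sig M with blank M}.

Definition config := (St M * int * tape)%type.
Definition cstate (c : config) : St M := c.1.1.
Definition chead (c : config) : int := c.1.2.
Definition ctape (c : config) : tape := c.2.

(* finite complex linear combinations of configurations, as formal sums *)
Definition combo := seq (config * C).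

Definition amp (L : combo) (c : config) : C := \sum_(e <- L | e.1 == c) e.2.
Definition supp (L : combo) : seq config := undup [seq e.1 | e <- L].

Definition moves : seq (Sig M * St M * dir) :=
  [seq (sq.1, sq.2, d) | sq <- [seq (s, q) | s <- enum (Sig M), q <- enum (St M)],
                          d <- dirs].

Definition succ_conf (c : config) (m : Sig M * St M * dir) : config :=
  (m.1.2, chead c + dshift m.2, [fsfun ctape c with chead c |-> m.1.1]).

Definition stepU (L : combo) : combo :=
  flatten [seq [seq (succ_conf e.1 m,
                     e.2 * delta (cstate e.1) (ctape e.1 (chead e.1)) m.1.1 m.1.2 m.2)
               | m <- moves] | e <- L].

Definition basis (c : config) : combo := [:: (c, 1)].

Definition Uent (c' c : config) : C := amp (stepU (basis c)) c'.

Definition inner (L L' : combo) : C :=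
  \sum_(c <- undup [seq e.1 | e <- L ++ L']) Num.conj (amp L c) * amp L' c.

(* all configurations b with possibly <c|U|b> != 0 *)
Definition preds (c : config) : seq config :=
  [seq (m.1.2, chead c - dshift m.2, [fsfun ctape c with chead c - dshift m.2 |-> m.1.1])
  | m <- moves].

(* U is unitary: U^* U = I and U U^* = I (entrywise; all sums are finite) *)
Definition unitary_qtm : Prop :=
  (forall c c', inner (stepU (basis c)) (stepU (basis c')) = (c == c')%:R) /\
  (forall c c', \sum_(b <- undup (preds c)) Uent c b * Num.conj (Uent c' b)
                = (c == c')%:R).

Definition init_tape (x : seq bool) : tape :=
  foldr (fun i (t : tape) => [fsfun t with (i%:Z) |-> (if nth false x i then sym1 M else sym0 M)])
        [fsfun for fun _ : int => blank M] (iota 0 (size x)).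

Definition init_combo (x : seq bool) : combo :=
  basis (q_init M, 0%:Z, init_tape x).

Definition run (t : nat) (x : seq bool) : combo := iter t stepU (init_combo x).

Definition sqnorm (z : C) : R := complex.Re z ^+ 2 + complex.Im z ^+ 2.

Definition prob_cell (L : combo) (k : int) (s : Sig M) : R :=
  \sum_(c <- supp L | ctape c k == s) sqnorm (amp L c).

End QTM.

Definition peval (p : seq nat) (n : nat) : nat :=
  \sum_(i < size p) nth 0 p i * n ^ i.

Local Open Scope classical_set_scope.
Section Classes.
Variable R : realType.

Definition EQP (Lang : seq bool -> Prop) : Prop :=
  exists (M : qtm R) (k : int) (p : seq nat),
    unitary_qtm M /\
    forall x : seq bool,
      (Lang x -> prob_cell (run M (peval p (size x)) x) k (sym1 M) = 1) /\
      (~ Lang x -> prob_cell (run M (peval p (size x)) x) k (sym0 M) = 1).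

(* An (eps,theta)-measurement: for a cell in state a|1> + b|0> (with
   p1 = |a|^2, p0 = |b|^2, p1 + p0 = 1) it returns a real value distributed
   according to mu p1 p0; an error is a value not within theta of p1 - p0;
   the error probability is < eps, and exactly 0 when a = 0 or b = 0. *)
Definition err_set (theta v : R) : set R := [set y : R | theta <= `|y - v|].

Definition eps_theta_measurement (eps theta : R)
    (mu : R -> R -> probability R R) : Prop :=
  forall p1 p0 : R, 0 <= p1 -> 0 <= p0 -> p1 + p0 = 1 ->
    (mu p1 p0 (err_set theta (p1 - p0)) < eps%:E)%E /\
    (p1 = 0 \/ p0 = 0 -> mu p1 p0 (err_set theta (p1 - p0)) = 0%E).

Definition EBQPstar (eps theta : R) (Lang : seq bool -> Prop) : Prop :=
  exists (M : qtm R) (k : int) (p : seq nat),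
    unitary_qtm M /\
    forall x : seq bool,
      let L := run M (peval p (size x)) x in
      let p1 := prob_cell L k (sym1 M) in
      let p0 := prob_cell L k (sym0 M) in
      (* the output cell is in a state a|1> + b|0>, |a|^2 + |b|^2 = 1 *)
      p1 + p0 = 1 /\
      forall mu : R -> R -> probability R R,
        eps_theta_measurement eps theta mu ->
        (Lang x -> mu p1 p0 [set y : R | 1 - theta < y] = 1%E) /\
        (~ Lang x -> mu p1 p0 [set y : R | y < -1 + theta] = 1%E).
End Classes.

(* Main.v *)
Require Import Defs.
From HB Require Import structures.
From mathcomp Require Import all_boot all_order all_algebra.
From mathcomp Require Import reals.
From mathcomp Require Import finmap ereal boolp classical_sets measure lebesgue_measure probability.
From mathcomp.real_closed Require Import complex.
From mathcomp Require Import ring lra.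

Import Order.TTheory GRing.Theory Num.Theory.
Local Open Scope ring_scope.

Section Lin.
Variable R : realType.
Variable M : qtm R.
Local Notation C := R[i].
Local Notation config := (config M).
Local Notation combo := (combo M).

Definition keys (L : combo) : seq config := [seq e.1 | e <- L].

Lemma amp_cat (L1 L2 : combo) c : amp (L1 ++ L2) c = amp L1 c + amp L2 c.
Proof. by rewrite /amp big_cat. Qed.

Lemma amp_notin (L : combo) c : c \notin keys L -> amp L c = 0.
Proof.
move=> cL; rewrite /amp big_seq_cond big1 // => e /andP[eL /eqP ec].
by move: cL; rewrite -ec (map_f (fun e : config * C => e.1) eL).
Qed.

Lemma ip_gen (s : seq config) (L L' : combo) : uniq s ->
  {subset keys L <= s} -> {subset keys L' <= s} ->
  inner L L' = \sum_(c <- s) Num.conj (amp L c) * amp L' c.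
Proof.
move=> us sL sL'; rewrite /inner.
set K := undup _.
rewrite [RHS](bigID (mem K)) /=.
rewrite [X in _ = _ + X]big1 ?addr0; last first.
  move=> c cK; rewrite (@amp_notin L' c) ?mulr0 //.
  apply: contra cK => cL'; rewrite mem_undup map_cat mem_cat.
  by rewrite -/(keys L') cL' orbT.
rewrite -[RHS]big_filter; apply: perm_big; apply: uniq_perm.
- exact: undup_uniq.
- exact: filter_uniq.
move=> c; rewrite mem_filter /=; case cK: (c \in K) => //=; symmetry.
move: cK; rewrite mem_undup map_cat mem_cat -/(keys L) -/(keys L').
by case/orP => [/sL|/sL'].
Qed.

Lemma sum_pred1_seq (s : seq config) (c : config) (G : config -> C) :
  uniq s -> c \in s -> \sum_(d <- s) (if c == d then G d else 0) = G c.
Proof.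
move=> us cs; rewrite (bigD1_seq c) //= eqxx big1 ?addr0 // => d dc.
by rewrite eq_sym (negbTE dc).
Qed.

Lemma ip_expand (s : seq config) (L : combo) (G : config -> C) : uniq s ->
  {subset keys L <= s} ->
  \sum_(c <- s) Num.conj (amp L c) * G c = \sum_(e <- L) Num.conj e.2 * G e.1.
Proof.
move=> us sL.
transitivity (\sum_(c <- s) \sum_(e <- L) (if e.1 == c then Num.conj e.2 * G c else 0)).
  apply: eq_bigr => c _; rewrite /amp rmorph_sum mulr_suml big_mkcond /=.
  by apply: eq_bigr => e _; case: ifP; rewrite ?mul0r.
rewrite exchange_big /= big_seq [RHS]big_seq; apply: eq_bigr => e eL.
rewrite (@sum_pred1_seq _ e.1 (fun d => Num.conj e.2 * G d)) //.
by apply: sL; apply: map_f.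
Qed.

Definition gL (e : config * C) : combo :=
  [seq (succ_conf e.1 m,
        e.2 * delta (cstate e.1) (ctape e.1 (chead e.1)) m.1.1 m.1.2 m.2)
  | m <- moves M].

Definition sk (c : config) : seq config := [seq succ_conf c m | m <- moves M].

Lemma stepU_cons e (L : combo) : stepU (e :: L) = gL e ++ stepU L.
Proof. by []. Qed.

Lemma keys_gL e : keys (gL e) = sk e.1.
Proof. by rewrite /keys /gL -map_comp. Qed.

Lemma amp_gL e d : amp (gL e) d = e.2 * Uent d e.1.
Proof.
rewrite /Uent /Defs.basis /stepU /= cats0 /amp !big_map /= mulr_sumr.
by apply: eq_bigr => m _; rewrite mul1r.
Qed.

Lemma amp_step (L : combo) d : amp (stepU L) d = \sum_(e <- L) e.2 * Uent d e.1.
Proof.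
elim: L => [|e L IH]; first by rewrite /amp big_nil big_nil.
by rewrite stepU_cons amp_cat IH amp_gL big_cons.
Qed.

Lemma keys_step_sub (L : combo) e : e \in L -> {subset keys (stepU (Defs.basis e.1)) <= keys (stepU L)}.
Proof.
have -> : keys (stepU (Defs.basis e.1)) = sk e.1.
  by rewrite /Defs.basis stepU_cons /stepU /= cats0 keys_gL.
elim: L => [//|e' L IH]; rewrite inE => /orP[/eqP <-|eL] d dsk;
  rewrite stepU_cons /keys map_cat mem_cat -/(keys _) -/(keys _).
  by rewrite keys_gL dsk.
by rewrite (IH eL d dsk) orbT.
Qed.

Hypothesis unit1 : forall c c' : config, inner (stepU (Defs.basis c)) (stepU (Defs.basis c')) = (c == c')%:R.

Lemma inner_step (L L' : combo) : inner (stepU L) (stepU L') = inner L L'.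
Proof.
rewrite [RHS]/inner (ip_expand _ _ _ (undup_uniq _)); last first.
  by move=> c cL; rewrite mem_undup map_cat mem_cat -/(keys L) cL.
rewrite /inner; set S := undup _.
have uS : uniq S by exact: undup_uniq.
have sub1 : forall e, e \in L -> {subset keys (stepU (Defs.basis e.1)) <= S}.
  move=> e eL d /(@keys_step_sub _ _ eL) dk; rewrite mem_undup map_cat mem_cat.
  by rewrite -/(keys (stepU L)) dk.
have sub2 : forall e, e \in L' -> {subset keys (stepU (Defs.basis e.1)) <= S}.
  move=> e eL d /(@keys_step_sub _ _ eL) dk; rewrite mem_undup map_cat mem_cat.
  by rewrite -/(keys (stepU L')) dk orbT.
transitivity (\sum_(d <- S) \sum_(e <- L) \sum_(e' <- L')
   (Num.conj e.2 * e'.2) * (Num.conj (Uent d e.1) * Uent d e'.1)).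
  apply: eq_bigr => d _; rewrite !amp_step rmorph_sum mulr_suml.
  apply: eq_bigr => e _; rewrite mulr_sumr; apply: eq_bigr => e' _.
  by rewrite rmorphM mulrACA.
rewrite exchange_big big_seq [RHS]big_seq; apply: eq_bigr => e eL /=.
rewrite exchange_big /= /amp [X in _ = _ * X]big_mkcond [RHS]mulr_sumr big_seq [RHS]big_seq.
apply: eq_bigr => e' eL'.
rewrite -mulr_sumr.
have -> : \sum_(i <- S) Num.conj (Uent i e.1) * Uent i e'.1 = (e.1 == e'.1)%:R.
  by rewrite -unit1 (ip_gen _ _ _ uS (sub1 _ eL) (sub2 _ eL')).
by rewrite eq_sym; case: eqP => _; rewrite ?mulr1 ?mulr0.
Qed.


Lemma inner_basis (c : config) : inner (Defs.basis c) (Defs.basis c) = 1.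
Proof.
rewrite /inner /Defs.basis /= inE eqxx /= big_cons big_nil addr0 /amp.
by rewrite big_cons big_nil eqxx addr0 rmorph1 mulr1.
Qed.

Lemma inner_run t x : inner (run M t x) (run M t x) = 1.
Proof.
rewrite /run; elim: t => [|t IH]; first exact: inner_basis.
by rewrite iterS inner_step.
Qed.

Lemma conj_mul_sq (z : C) : Num.conj z * z = real_complex R (sqnorm z).
Proof.
case: z => a b; rewrite /sqnorm /=; apply/eqP; rewrite eq_complex /=.
by apply/andP; split; apply/eqP; ring.
Qed.

Lemma inner_sq (L : combo) :
  inner L L = real_complex R (\sum_(c <- supp L) sqnorm (amp L c)).
Proof.
rewrite (@ip_gen (supp L) L L (undup_uniq _)); last first.
- by move=> c cL; rewrite mem_undup.
- by move=> c cL; rewrite mem_undup.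
rewrite rmorph_sum; apply: eq_bigr => c _; exact: conj_mul_sq.
Qed.

Lemma sqnorm_ge0 (z : C) : 0 <= sqnorm z.
Proof. by rewrite /sqnorm addr_ge0 // sqr_ge0. Qed.

Lemma prob_cell_ge0 (L : combo) k s : 0 <= prob_cell L k s.
Proof. by apply: sumr_ge0 => c _; exact: sqnorm_ge0. Qed.

Lemma prob_sum_le1 t x k :
  prob_cell (run M t x) k (sym1 M) + prob_cell (run M t x) k (sym0 M) <= 1.
Proof.
have h := inner_run t x; rewrite inner_sq in h.
have {h} h : \sum_(c <- supp (run M t x)) sqnorm (amp (run M t x) c) = 1.
  by move/(congr1 (@complex.Re R)): h.
rewrite -h /prob_cell !(big_mkcond (fun c => _ == _)) -big_split /=.
apply: ler_sum => c _.
have d01 : sym0 M != sym1 M.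
  by have := Sig_distinct M; rewrite /= !inE negb_or => /andP[/andP[_ _] /andP[]].
case: eqP => [->|_]; case: eqP => [e|_]; rewrite ?addr0 ?add0r ?lexx //.
- by move: d01; rewrite e eqxx.
- exact: sqnorm_ge0.
Qed.

End Lin.

Local Open Scope classical_set_scope.
Section Mm.
Variable R : realType.

Lemma err_setE (theta v : R) : err_set theta v = ~` `](v - theta), (v + theta)[.
Proof.
rewrite /err_set; apply/seteqP; split => y /=.
  move=> h; rewrite in_itv /= => /andP[h1 h2].
  have : `|y - v| < theta by rewrite ltr_norml; apply/andP; split; lra.
  by rewrite ltNge h.
move/negP; rewrite in_itv /= => h; rewrite real_leNgt ?num_real //; apply/negP => h2.
apply/negP: h; move: h2; rewrite ltr_norml => /andP[h1 h2]; rewrite negbK; apply/andP; split; lra.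
Qed.

Lemma errC (theta v : R) : ~` err_set theta v = `](v - theta), (v + theta)[.
Proof. by rewrite err_setE setCK. Qed.

Lemma err_set_meas (theta v : R) : measurable (err_set theta v).
Proof. by rewrite err_setE; apply: measurableC; apply: measurable_itv. Qed.

Lemma full_of_err0 (P : probability R R) (theta v : R) (S : set R) :
  measurable S -> `](v - theta), (v + theta)[ `<=` S ->
  P (err_set theta v) = 0%E -> P S = 1%E.
Proof.
move=> mS sub h; apply/le_anti/andP; split; first exact: probability_le1.
have : P (~` err_set theta v) = 1%E.
  rewrite probability_setC; last exact: err_set_meas.
  by rewrite h sube0.
rewrite errC => <-; apply: le_measure => //; rewrite inE //.
Qed.

End Mm.

Local Open Scope classical_set_scope.

Lemma dirac_eq1 (R : realType) (y : R) (S : set R) : (\d_y S = 1 :> \bar R)%E -> S y.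
Proof.
rewrite diracE; case: (boolP (y \in S)) => [/set_mem //|_] /=.
by move/(congr1 fine) => /= /eqP; rewrite eq_sym oner_eq0.
Qed.

Lemma dirac_valid (R : realType) (eps theta : R) (f : R -> R -> R) :
  0 < eps ->
  (forall a b, 0 <= a -> 0 <= b -> a + b = 1 -> `|f a b - (a - b)| < theta) ->
  eps_theta_measurement eps theta (fun a b => (\d_(f a b) : probability R R)).
Proof.
move=> e0 hf a b a0 b0 ab.
have E : (\d_(f a b) (err_set theta (a - b)) = 0 :> \bar R)%E.
  rewrite diracE; case: (boolP (f a b \in _)) => //= /set_mem /=.
  by move=> h; have := hf a b a0 b0 ab; rewrite ltNge h.
split; last by move=> _; exact: E.
by rewrite [X in (X < _)%E]E lte_fin.
Qed.

Theorem mainTheorem2 (R : realType) (eps theta : R) :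
  0 < eps -> 0 < theta ->
  forall Lang : seq bool -> Prop, EQP R Lang <-> EBQPstar eps theta Lang.
Proof.
move=> e0 t0 Lang; split.
- case=> Mq [k [p [U H]]]; exists Mq, k, p; split => // x /=.
  set L := run Mq _ x.
  have le1 : prob_cell L k (sym1 Mq) + prob_cell L k (sym0 Mq) <= 1.
    exact: (@prob_sum_le1 R Mq U.1).
  have g1 := @prob_cell_ge0 R Mq L k (sym1 Mq).
  have g0 := @prob_cell_ge0 R Mq L k (sym0 Mq).
  case: (H x) => h1 h0.
  have [hL|hL] := pselect (Lang x).
  + have e1 := h1 hL.
    have e0' : prob_cell L k (sym0 Mq) = 0 by lra.
    rewrite e1 e0'; split; first by rewrite addr0.
    move=> mu hmu; split => // _.
    have herr := (hmu 1 0 ler01 (lexx 0) (addr0 1)).2 (or_intror erefl).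
    apply: (@full_of_err0 R _ theta _ _ _ _ herr).
      have -> : [set y : R | 1 - theta < y] = `](1 - theta), +oo[.
        by apply/seteqP; split => y /=; rewrite in_itv /= andbT.
      exact: measurable_itv.
    by move=> y /=; rewrite in_itv /= => /andP[h _]; lra.
  + have e1 := h0 hL.
    have e0' : prob_cell L k (sym1 Mq) = 0 by lra.
    rewrite e1 e0'; split; first by rewrite add0r.
    move=> mu hmu; split => // _.
    have herr := (hmu 0 1 (lexx 0) ler01 (add0r 1)).2 (or_introl erefl).
    apply: (@full_of_err0 R _ theta _ _ _ _ herr).
      have -> : [set y : R | y < -1 + theta] = `]-oo, (-1 + theta)[.
        by apply/seteqP; split => y /=; rewrite in_itv /=.
      exact: measurable_itv.
    by move=> y /=; rewrite in_itv /= => /andP[_ h]; lra.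
- case=> Mq [k [p [U H]]]; exists Mq, k, p; split => // x.
  case: (H x) => /=; set p1 := prob_cell _ _ _; set p0 := prob_cell _ _ _.
  move=> hsum Hmu; split => hL.
  + pose f (a b : R) := if a - b == 1 then a - b
                        else if a - b < 1 - theta then a - b else 1 - theta.
    have hv : forall a b : R, 0 <= a -> 0 <= b -> a + b = 1 -> `|f a b - (a - b)| < theta.
      move=> a b a0 b0 ab; rewrite /f; case: ifP => [_|/negbT hn].
        by rewrite subrr normr0.
      have vlt : a - b < 1 by rewrite lt_neqAle hn /=; lra.
      case: ifP => [_|/negbT]; first by rewrite subrr normr0.
      rewrite -leNgt => hge; rewrite ltr_norml; apply/andP; split; lra.
    have := (Hmu _ (@dirac_valid R eps theta f e0 hv)).1 hL => /dirac_eq1 /=.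
    rewrite /f; case: ifP => [/eqP h _|_]; first lra.
    by case: ifP => h; lra.
  + pose f (a b : R) := if a - b == -1 then a - b
                        else if -1 + theta < a - b then a - b else -1 + theta.
    have hv : forall a b : R, 0 <= a -> 0 <= b -> a + b = 1 -> `|f a b - (a - b)| < theta.
      move=> a b a0 b0 ab; rewrite /f; case: ifP => [_|/negbT hn].
        by rewrite subrr normr0.
      have vlt : -1 < a - b by rewrite lt_neqAle eq_sym hn /=; lra.
      case: ifP => [_|/negbT]; first by rewrite subrr normr0.
      rewrite -leNgt => hge; rewrite ltr_norml; apply/andP; split; lra.
    have := (Hmu _ (@dirac_valid R eps theta f e0 hv)).2 hL => /dirac_eq1 /=.
    rewrite /f; case: ifP => [/eqP h _|_]; first lra.
    by case: ifP => h; lra.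
Qed.
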